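(* Let $G_1,G_2$ be countable infinite groups, $\Sigma$ a finite set, $\phi:G_1\to G_2$ a surjective group homomorphism, and let $X\subseteq\Sigma^{G_2}$ and $Y\subseteq\Sigma^{G_1}$ be minimal subshifts. If $\pi:X\to Y$ is a surjective continuous map that is $\phi$-equivariant, i.e. $\sigma_{G_1}^g\pi(x)=\pi(\sigma_{G_2}^{\phi(g)}x)$ for all $g\in G_1$, $x\in X$, then $(\pi\times\dots\times\pi)(\mathrm{IN}_n(X))=\mathrm{IN}_n(Y)$ for each $n\in\mathbb N$.
   Context: $\Sigma^{G_i}$ has the product topology and shift $\sigma_{G_i}^g(x)(h)=x(g^{-1}h)$; a subshift is a nonempty closed shift-invariant set, minimal if all orbits are dense. For a $G$-system $(Z,\varphi,G)$ and subsets $A_1,\dots,A_k\subseteq Z$, $J\subseteq G$ is an independence set if $\bigcap_{g\in I}\varphi^{g^{-1}}A_{s(g)}\neq\emptyset$ for every nonempty finite $I\subseteq J$ and every $s:I\to\{1,\dots,k\}$. $\mathrm{IN}_n(Z)$ is the set of $(z_1,\dots,z_n)\in Z^n$ such that for every product neighborhood $U_1\times\dots\times U_n$ of it, $(U_1,\dots,U_n)$ has arbitrarily large finite independence sets. *)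

(* Defs.v *)
From mathcomp Require Import all_boot.
From Stdlib Require List.

Set Implicit Arguments.
Unset Strict Implicit.
Unset Printing Implicit Defensive.

Record DGroup := {
  gcarrier :> Type;
  gmul : gcarrier -> gcarrier -> gcarrier;
  gone : gcarrier;
  ginv : gcarrier -> gcarrier;
  gmulA : forall a b c, gmul a (gmul b c) = gmul (gmul a b) c;
  gmul1 : forall a, gmul gone a = a;
  gmulg1 : forall a, gmul a gone = a;
  gmulV : forall a, gmul (ginv a) a = gone;
  gmulgV : forall a, gmul a (ginv a) = gone
}.

Definition countable_type (T : Type) : Prop :=
  exists f : T -> nat, forall a b, f a = f b -> a = b.

Definition infinite_type (T : Type) : Prop :=
  ~ exists l : list T, forall a, List.In a l.

Definition group_hom (G1 G2 : DGroup) (phi : G1 -> G2) : Prop :=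
  forall a b, phi (gmul a b) = gmul (phi a) (phi b).

Definition cfg (G : DGroup) (Sigma : finType) := G -> Sigma.

Definition shift (G : DGroup) (Sigma : finType) (g : G) (x : cfg G Sigma)
  : cfg G Sigma := fun h => x (gmul (ginv g) h).

(* open sets of the product topology on Sigma^G (Sigma discrete):
   every point of U has a cylinder neighbourhood inside U *)
Definition open_cfg (G : DGroup) (Sigma : finType) (U : cfg G Sigma -> Prop)
  : Prop :=
  forall x, U x -> exists F : list G,
    forall y : cfg G Sigma, (forall h, List.In h F -> y h = x h) -> U y.

Definition closed_cfg (G : DGroup) (Sigma : finType) (C : cfg G Sigma -> Prop)
  : Prop := open_cfg (fun x => ~ C x).

Definition subshift (G : DGroup) (Sigma : finType) (X : cfg G Sigma -> Prop)
  : Prop :=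
  (exists x, X x) /\ closed_cfg X /\
  (forall g x, X x -> X (shift g x)).

Definition minimal_subshift (G : DGroup) (Sigma : finType)
  (X : cfg G Sigma -> Prop) : Prop :=
  subshift X /\
  forall x, X x -> forall V : cfg G Sigma -> Prop, open_cfg V ->
    (exists y, X y /\ V y) -> exists g, V (shift g x).

Definition nbhd_in (G : DGroup) (Sigma : finType) (Z : cfg G Sigma -> Prop)
  (z : cfg G Sigma) (U : cfg G Sigma -> Prop) : Prop :=
  (forall y, U y -> Z y) /\
  exists V, open_cfg V /\ V z /\ (forall y, Z y -> V y -> U y).

Definition indep_set (G : DGroup) (Sigma : finType) (Z : cfg G Sigma -> Prop)
  (k : nat) (A : 'I_k -> cfg G Sigma -> Prop) (J : list G) : Prop :=
  forall (I : list G), I <> nil -> (forall g, List.In g I -> List.In g J) ->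
  forall s : G -> 'I_k,
    exists z, Z z /\ forall g, List.In g I -> A (s g) (shift g z).

Definition arb_large_indep (G : DGroup) (Sigma : finType)
  (Z : cfg G Sigma -> Prop) (k : nat) (A : 'I_k -> cfg G Sigma -> Prop)
  : Prop :=
  forall N : nat, exists J : list G,
    List.NoDup J /\ (N <= length J)%coq_nat /\ indep_set Z A J.

Definition IN (G : DGroup) (Sigma : finType) (Z : cfg G Sigma -> Prop)
  (n : nat) (z : 'I_n -> cfg G Sigma) : Prop :=
  (forall i, Z (z i)) /\
  forall U : 'I_n -> cfg G Sigma -> Prop,
    (forall i, nbhd_in Z (z i) (U i)) -> arb_large_indep Z U.

Definition continuous_on (G1 G2 : DGroup) (Sigma : finType)
  (X : cfg G2 Sigma -> Prop) (pi : cfg G2 Sigma -> cfg G1 Sigma) : Prop :=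
  forall V : cfg G1 Sigma -> Prop, open_cfg V ->
    exists W : cfg G2 Sigma -> Prop, open_cfg W /\
      forall x, X x -> (V (pi x) <-> W x).

(* Main.v *)
Require Import Defs.
From mathcomp Require Import all_boot zify.
From Stdlib Require List.
From Stdlib Require Import ClassicalEpsilon Classical FunctionalExtensionality.
Set Implicit Arguments.
Unset Strict Implicit.
Unset Printing Implicit Defensive.

Lemma sum_tuple_cons (T : finType) m (F : m.+1.-tuple T -> nat) :
  \sum_(w : m.+1.-tuple T) F w = \sum_(t : T) \sum_(w : m.-tuple T) F (cons_tuple t w).
Proof.
rewrite pair_big /=.
rewrite (reindex (fun p : T * m.-tuple T => cons_tuple p.1 p.2)) //=.
exists (fun w : m.+1.-tuple T => (thead w, behead_tuple w)) => [[t w]|w] _ /=.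
  by congr pair; apply: val_inj.
by case/tupleP: w => t w; apply: val_inj.
Qed.

Lemma sum_tuple0 (T : finType) (F : 0.-tuple T -> nat) :
  \sum_(w : 0.-tuple T) F w = F [tuple].
Proof.
rewrite (big_pred1 [tuple]) // => w /=. by rewrite (tuple0 w); apply/esym/eqP.
Qed.

Lemma sum_prod_tuple (T : finType) (nu : T -> nat) m :
  \sum_(s : m.-tuple T) \prod_(x <- s) nu x = (\sum_t nu t)^m.
Proof.
elim: m => [|m IH]; first by rewrite sum_tuple0 big_nil.
rewrite sum_tuple_cons expnS big_distrl /=.
apply: eq_bigr => t _; rewrite -IH big_distrr /=.
by apply: eq_bigr => w _; rewrite big_cons.
Qed.

Lemma sum_opt (G : option bool -> nat) : \sum_(o : option bool) G o = G None + G (Some true) + G (Some false).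
Proof. rewrite (bigD1 None) // (bigD1 (Some true)) // (bigD1 (Some false)) //= big_pred0; first by rewrite addn0 addnA.
by case=> [[]|]. Qed.

Lemma leq_bmul (a b : bool) n : (a -> b) -> a * n <= b * n.
Proof. by case: a; case: b => // /(_ isT). Qed.

Lemma hmul (a b : bool) x y : (a -> b) -> y * (x * a) <= b * (x * y).
Proof.
case: a; case: b => //= H; rewrite ?muln1 ?mul1n ?muln0 ?mul0n //; first by rewrite mulnC.
by have := H isT.
Qed.

Section Pajor.
Variables (L : finType) (mu : L -> nat) (al be : nat) (Dl : bool -> {set L}).
Hypothesis pw : forall T : {set L}, \sum_(l in T) mu l <=
   al * (T != set0) + be * (Dl true \subset T) + be * (Dl false \subset T).

Fixpoint compat (pi : seq (option bool)) (p : seq L) : bool :=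
  match pi, p with
  | o :: pi', l :: p' => (if o is Some X then l \in Dl X else true) && compat pi' p'
  | _, _ => true end.
Fixpoint agree (pi : seq (option bool)) (w p : seq L) : bool :=
  match pi, w, p with
  | o :: pi', a :: w', b :: p' => ((o == None) || (a == b)) && agree pi' w' p'
  | _, _, _ => true end.

Definition sh m (pi : m.-tuple (option bool)) (S : {set m.-tuple L}) : bool :=
  [forall p : m.-tuple L, compat pi p ==> [exists w in S, agree pi w p]].
Definition wt (pi : seq (option bool)) := \prod_(o <- pi) (if o is Some _ then be else al).
Definition mass m (S : {set m.-tuple L}) := \sum_(w in S) \prod_(l <- w) mu l.
Definition Wt m (S : {set m.-tuple L}) := \sum_(pi : m.-tuple (option bool)) sh pi S * wt pi.
Definition slice m (S : {set m.+1.-tuple L}) t : {set m.-tuple L} := [set w | cons_tuple t w \in S].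

Lemma sh_None m (pi : m.-tuple _) S t : sh pi (slice S t) -> sh (cons_tuple None pi) S.
Proof.
move/forallP=> H; apply/forallP => p; apply/implyP.
case/tupleP: p => l p /= Hc.
have /implyP/(_ Hc)/existsP [w /andP [Hw Ha]] := H p.
apply/existsP; exists (cons_tuple t w); rewrite /= Ha andbT.
by rewrite inE in Hw; rewrite Hw.
Qed.

Lemma sh_Some m (pi : m.-tuple _) S X : (forall t, t \in Dl X -> sh pi (slice S t)) ->
  sh (cons_tuple (Some X) pi) S.
Proof.
move=> H; apply/forallP => p; apply/implyP; case/tupleP: p => l p /= /andP [Hl Hc].
have /forallP/(_ p)/implyP/(_ Hc)/existsP [w /andP [Hw Ha]] := H l Hl.
apply/existsP; exists (cons_tuple l w); rewrite inE in Hw; by rewrite /= Hw eqxx Ha.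
Qed.

Lemma mass_cons m (S : {set m.+1.-tuple L}) : mass S = \sum_t mu t * mass (slice S t).
Proof.
rewrite /mass big_mkcond sum_tuple_cons; apply: eq_big => // t _.
rewrite big_distrr [in RHS]big_mkcond /=; apply: eq_bigr => w _; rewrite inE big_cons.
by case: (_ \in S).
Qed.

Lemma Wt_cons m (S : {set m.+1.-tuple L}) : \sum_t mu t * Wt (slice S t) <= Wt S.
Proof.
rewrite /Wt sum_tuple_cons.
have -> : \sum_t mu t * (\sum_(pi : m.-tuple (option bool)) sh pi (slice S t) * wt pi)
  = \sum_(pi : m.-tuple (option bool)) wt pi * \sum_(t in [set t | sh pi (slice S t)]) mu t.
  under eq_bigr => t _ do rewrite big_distrr /=.
  rewrite exchange_big /=; apply: eq_bigr => pi _.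
  rewrite big_distrr /= [in RHS]big_mkcond /=; apply: eq_bigr => t _.
  rewrite inE; case: (sh _ _) => /=; first by rewrite mul1n mulnC.
  by rewrite mul0n !muln0.
rewrite exchange_big /=; apply: leq_sum => pi _.
rewrite sum_opt /wt !big_cons /= -/(wt pi).
set T := [set t | sh pi (slice S t)].
apply: (leq_trans (leq_mul (leqnn (wt pi)) (pw T))).
rewrite !mulnDr; apply: leq_add; first apply: leq_add.
- apply: hmul => /set0Pn [t]; rewrite inE; exact: sh_None.
- by apply: hmul => /subsetP H; apply: sh_Some => t /H; rewrite inE.
- by apply: hmul => /subsetP H; apply: sh_Some => t /H; rewrite inE.
Qed.

Lemma pajor m (S : {set m.-tuple L}) : mass S <= Wt S.
Proof.
elim: m S => [|m IH] S.
  rewrite /Wt sum_tuple0.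
  have [->|[w Hw]] := set_0Vmem S; first by rewrite /mass big_set0.
  have -> : sh [tuple] S.
    apply/forallP => p; apply/implyP => _; apply/existsP; exists w.
    by rewrite Hw (tuple0 w) (tuple0 p).
  rewrite /wt big_nil mul1n /mass.
  rewrite (eq_bigr (fun _ => 1)) => [|u _]; last by rewrite (tuple0 u) big_nil.
  rewrite sum1_card; apply: (leq_trans (max_card _)).
  by rewrite card_tuple expn0.
rewrite mass_cons; apply: leq_trans (Wt_cons S).
by apply: leq_sum => t _; apply: leq_mul.
Qed.


Definition Nb m D := \sum_(pi : m.-tuple (option bool) | count isSome pi < D) wt pi.

Lemma big_sh m (S : {set m.-tuple L}) D : Nb m D < mass S ->
  exists pi : m.-tuple (option bool), sh pi S && (D <= count isSome pi).
Proof.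
move=> H.
case: (boolP [exists pi : m.-tuple (option bool), sh pi S && (D <= count isSome pi)]).
  by move/existsP.
move/existsPn => Hn; exfalso.
have : Wt S <= Nb m D.
  rewrite /Wt /Nb (bigID (fun pi : m.-tuple (option bool) => count isSome pi < D)) /=.
  rewrite [X in _ + X]big1 ?addn0.
    by apply: leq_sum => pi _; case: (sh _ _); rewrite ?mul1n ?mul0n.
  move=> pi Hpi; have := Hn pi; rewrite leqNgt Hpi andbT => /negbTE ->.
  by rewrite mul0n.
move=> H2; have := leq_trans (pajor S) H2; by rewrite leqNgt H.
Qed.

Lemma Nb0 m : Nb m 0 = 0.
Proof. by rewrite /Nb big_pred0. Qed.

Lemma Nb_S m D : Nb m.+1 D.+1 = al * Nb m D.+1 + be * Nb m D + be * Nb m D.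
Proof.
rewrite /Nb big_mkcond sum_tuple_cons sum_opt !big_distrr /=.
congr (_ + _ + _); rewrite [in RHS]big_mkcond; apply: eq_bigr => w _;
  rewrite /wt big_cons /=; by case: ifP; rewrite ?muln0.
Qed.

Lemma leq_expr a b e : a <= b -> a ^ e <= b ^ e.
Proof. move=> H; elim: e => // e IH; rewrite !expnS; exact: leq_mul. Qed.

Hypothesis al1 : 0 < al.
Hypothesis be1 : 0 < be.

Lemma Nb_bound m D : Nb m D <= (2 * be) ^ D * (m.+1) ^ D * al ^ m.
Proof.
elim: m D => [|m IH] D.
  rewrite /Nb big_mkcond sum_tuple0 /wt big_nil expn0 exp1n muln1.
  case: ifP => // _; by rewrite muln1 expn_gt0 muln_gt0 be1.
case: D => [|D]; first by rewrite Nb0.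
rewrite Nb_S.
have H1 := IH D.+1; have H2 := IH D.
have H3 : m.+1 ^ D <= m.+2 ^ D by apply: leq_expr.
move: H1 H2 H3; rewrite !expnS.
set P := (2 * be) ^ D; set A := m.+1 ^ D; set B := m.+2 ^ D; set Q := al ^ m.
move: (Nb m D.+1) (Nb m D) => N1 N2 H1 H2 H3.
rewrite -addnA.
have -> : be * N2 + be * N2 = 2 * be * N2 by rewrite -mulnDl addnn -mul2n ?mulnA.
apply: (leq_trans (leq_add (leq_mul (leqnn al) H1) (leq_mul (leqnn (2 * be)) H2))).
set K := 2 * be.
have -> : al * (K * P * (m.+1 * A) * Q) + K * (P * A * Q) = (K * P * Q) * (al * m.+1 * A + A).
  by rewrite !mulnA; nia.
have -> : K * P * (m.+2 * B) * (al * Q) = (K * P * Q) * (al * m.+2 * B).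
  by rewrite !mulnA; nia.
apply: leq_mul => //.
have Ha := al1.
nia.
Qed.

End Pajor.

Lemma bern x n : x ^ n * (x + n) <= (x + 1) ^ n * x.
Proof.
elim: n => [|n IH]; first by rewrite !expn0 addn0.
rewrite !expnS.
move: IH; set X := x ^ n; set Y := (x + 1) ^ n => IH.
nia.
Qed.

Lemma twoexp a : 0 < a -> 2 * a ^ a <= (a + 1) ^ a.
Proof.
move=> Ha; have H := bern a a.
rewrite -(leq_pmul2r Ha); apply: leq_trans H.
rewrite addnn -mul2n; nia.
Qed.

Lemma F_aux c P : exists i, c * i.+1 <= 2 ^ i /\ P < 2 ^ i.
Proof.
set u := 2 * c + P; exists (2 * u).
have Hu : u < 2 ^ u by apply: ltn_expl.
rewrite expnM.
have H2 : (2 ^ 2) ^ u = 2 ^ u * 2 ^ u by rewrite -expnM mulnC expnM expnS expn1 -expnMn.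
rewrite H2; move: Hu; set E := 2 ^ u => Hu.
split; nia.
Qed.

Lemma E_aux P D : exists j, P * j.+1 ^ D < 2 ^ j.
Proof.
have [i [H1 H2]] := F_aux D.+1 P.
exists (D.+1 * i).
have -> : 2 ^ (D.+1 * i) = 2 ^ i * (2 ^ i) ^ D by rewrite mulnC expnM expnS.
have H3 : (D.+1 * i).+1 ^ D <= (2 ^ i) ^ D.
  apply: leq_expr; apply: leq_trans H1; nia.
have H4 : 0 < (2 ^ i) ^ D by rewrite !expn_gt0.
move: H3 H4; set E := (2 ^ i) ^ D; set F := (D.+1 * i).+1 ^ D => H3 H4.
nia.
Qed.

Lemma exp_beats a C D : 0 < a -> exists m, C * m.+1 ^ D * a ^ m < a.+1 ^ m.
Proof.
move=> Ha.
have [j Hj] := E_aux (C * a ^ D) D.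
exists (a * j).
have H1 : (a * j).+1 ^ D <= a ^ D * j.+1 ^ D.
  rewrite -expnMn; apply: leq_expr; nia.
have H2 : 2 ^ j * a ^ (a * j) <= a.+1 ^ (a * j).
  rewrite !expnM -expnMn; apply: leq_expr; have := twoexp Ha; by rewrite addn1.
have H3 : 0 < a ^ (a * j) by rewrite expn_gt0 Ha.
move: H1 H2 H3 Hj; set X := a ^ (a * j); set Y := (a * j).+1 ^ D; set Z := a ^ D; set V := j.+1 ^ D.
move=> H1 H2 H3 Hj.
have H4 : C * Y < 2 ^ j by apply: leq_ltn_trans Hj; rewrite -mulnA leq_mul2l H1 orbT.
by apply: leq_trans H2; rewrite ltn_pmul2r.
Qed.


Section Letters.
Variables (k : nat) (i0 : 'I_k).
Definition Lt := ('I_k + bool)%type.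
Definition mul (l : Lt) : nat := match l with inl t => if t == i0 then 0 else 4 | inr _ => 2 end.
Definition Dlt (X : bool) : {set Lt} :=
  [set l | match l with inl t => t != i0 | inr b => b == X end].
Definition alk := maxn (4 * k - 4) 1.

Lemma sum_inl : \sum_(t : 'I_k) mul (inl t) = 4 * (k - 1).
Proof.
rewrite (bigD1 i0) //= eqxx add0n.
rewrite (eq_bigr (fun _ => 4)) => [|t /negbTE -> //].
by rewrite sum_nat_const (@eq_card _ _ (predC1 i0)) // cardC1 card_ord mulnC subn1.
Qed.

Lemma pw_letters (T : {set Lt}) : \sum_(l in T) mul l <=
   alk * (T != set0) + 2 * (Dlt true \subset T) + 2 * (Dlt false \subset T).
Proof.
have [->|HT] := eqVneq T set0; first by rewrite big_set0.
rewrite /= muln1.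
have Hal : 4 * (k - 1) <= alk by rewrite /alk; apply: leq_trans (leq_maxl _ _); nia.
rewrite big_mkcond big_sumType /= big_bool /=.
case: (boolP [forall t, (t != i0) ==> (inl t \in T)]) => [/forallP HA | /forallPn [t0]].
  rewrite -addnA; apply: leq_add.
    apply: leq_trans Hal; rewrite -sum_inl; apply: leq_sum => t _; by case: ifP.
  apply: leq_add.
    case: ifP => // H; suff -> : Dlt true \subset T by [].
    apply/subsetP => l; rewrite inE.
    case: l => [t Ht|b /eqP ->] //; by have /implyP := HA t; apply.
  case: ifP => // H; suff -> : Dlt false \subset T by [].
  apply/subsetP => l; rewrite inE.
  case: l => [t Ht|b /eqP ->] //; by have /implyP := HA t; apply.
rewrite negb_imply => /andP [Ht0 /negbTE Hn].
apply: leq_trans (leq_addr _ _); apply: leq_trans (leq_addr _ _); apply: leq_trans Hal.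
rewrite -sum_inl (bigD1 t0) //= Hn add0n [X in _ <= X](bigD1 t0) //= (negbTE Ht0).
rewrite addnC; apply: leq_add; first by do 2 case: ifP.
apply: leq_sum => t _; by case: ifP.
Qed.
End Letters.

Lemma In_mem (T : eqType) (x : T) (s : seq T) : List.In x s <-> x \in s.
Proof.
elim: s => [|a s IH] //=; rewrite in_cons; split.
  by case=> [->|/IH ->]; rewrite ?eqxx ?orbT.
by case/orP => [/eqP ->|/IH]; [left|right].
Qed.

Lemma uniq_NoDup (T : eqType) (s : seq T) : uniq s -> List.NoDup s.
Proof.
elim: s => [|a s IH] /=; first by constructor.
case/andP => Ha Hs; constructor; last exact: IH.
by move/In_mem; apply/negP.
Qed.

Lemma compat_nth (L : finType) (Dl : bool -> {set L}) (pi : seq (option bool)) (p : seq L) l0 :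
  size pi = size p ->
  (forall j, j < size pi -> match nth None pi j with Some X => nth l0 p j \in Dl X | None => true end) ->
  compat Dl pi p.
Proof.
elim: pi p => [|o pi IH] [|l p] //= [Hs] H.
apply/andP; split; first by have := H 0 isT.
apply: IH => // j Hj; exact: (H j.+1).
Qed.

Lemma agree_nth (L : finType) (pi : seq (option bool)) (w p : seq L) l0 :
  agree pi w p -> size pi = size w -> size pi = size p ->
  forall j, j < size pi -> nth None pi j != None -> nth l0 w j = nth l0 p j.
Proof.
elim: pi w p => [|o pi IH] [|a w] [|b p] //= /andP [H1 H2] [Hw] [Hp] [|j] Hj /= Hn.
  by move: H1; rewrite (negbTE Hn) => /eqP.
exact: IH.
Qed.

Lemma count_isSome (pi : seq (option bool)) :
  count isSome pi = count (pred1 (Some true)) pi + count (pred1 (Some false)) pi.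
Proof. elim: pi => [|[[]|] pi IH] //=; rewrite IH; move: (count_mem (Some true) pi) (count_mem (Some false) pi) => a b; lia. Qed.

Definition asb (P : Prop) : bool := if excluded_middle_informative P then true else false.
Lemma asbP P : asb P = true <-> P.
Proof. by rewrite /asb; case: excluded_middle_informative. Qed.

Definition updA (G : DGroup) (Sigma : finType) k (A' : 'I_k -> cfg G Sigma -> Prop) (i : 'I_k)
  (E : cfg G Sigma -> Prop) : 'I_k -> cfg G Sigma -> Prop :=
  fun j => if j == i then E else A' j.

Section U.
Variables (G : DGroup) (Sigma : finType) (Z : cfg G Sigma -> Prop) (k : nat)
  (A : 'I_k -> cfg G Sigma -> Prop) (i0 : 'I_k) (B C : cfg G Sigma -> Prop).
Hypothesis HBC : forall z, A i0 z -> B z \/ C z.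

Definition letter (t : 'I_k) (b : bool) : Lt k := if t == i0 then inr b else inl t.

Lemma letter_inj t b t' b' : letter t b = letter t' b' -> t = t' /\ (t = i0 -> b = b').
Proof.
rewrite /letter; case: (eqVneq t i0) => [->|Hn]; case: (eqVneq t' i0) => [->|Hn'] H;
  try discriminate; case: H => H; subst => //.
by split => // E; move: Hn; rewrite E eqxx.
Qed.

Lemma union_core d : arb_large_indep Z A -> exists J, List.NoDup J /\ (d <= length J)%coq_nat /\
  (indep_set Z (updA A i0 B) J \/ indep_set Z (updA A i0 C) J).
Proof.
move=> HA.
set D := 2 * d.
set al := alk k.
have al1 : 0 < al by rewrite /al /alk leq_max orbT.
have [m Hm] := exp_beats ((2 * 2) ^ D) D al1.
have m0 : 0 < m.
  case: m Hm => // ; rewrite expn0 muln1 exp1n muln1 ltnS leqn0 expn_eq0 //.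
have [J [HJnd [HJl HJi]]] := HA m.
have HJl' : m <= length J by apply/leP.
pose gj (j : 'I_m) := List.nth j J (gone G).
have gjI : injective gj.
  move=> j1 j2 H; apply: val_inj.
  apply: (proj1 (List.NoDup_nth J (gone G)) HJnd) => //; apply/ltP;
    exact: leq_trans (ltn_ord _) HJl'.
have gjIn : forall j, List.In (gj j) J.
  move=> j; apply: List.nth_In; apply/ltP; exact: leq_trans (ltn_ord _) HJl'.
have Hw : forall s : m.-tuple 'I_k, exists z, Z z /\ forall j, A (tnth s j) (shift (gj j) z).
  move=> s.
  pose sf := fun g => match excluded_middle_informative (exists j, gj j = g) with
    | left H => tnth s (proj1_sig (constructive_indefinite_description _ H)) | right _ => i0 end.
  have sfE : forall j, sf (gj j) = tnth s j.
    move=> j; rewrite /sf; case: excluded_middle_informative => [H|[]]; last by exists j.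
    by case: (constructive_indefinite_description _ _) => j' /= /gjI ->.
  have HI : J <> nil by move=> E; move: HJl'; rewrite E /=; case: (m) m0.
  have [z [Hz1 Hz2]] := HJi J HI (fun g h => h) sf.
  exists z; split => // j; rewrite -sfE; exact: Hz2 (gjIn j).
pose zf s := proj1_sig (constructive_indefinite_description _ (Hw s)).
have zfZ : forall s, Z (zf s) by move=> s; exact: (proj1 (proj2_sig (constructive_indefinite_description _ (Hw s)))).
have zfA : forall s j, A (tnth s j) (shift (gj j) (zf s))
  by move=> s; exact: (proj2 (proj2_sig (constructive_indefinite_description _ (Hw s)))).
pose wf (s : m.-tuple 'I_k) : m.-tuple (Lt k) :=
  [tuple letter (tnth s j) (asb (B (shift (gj j) (zf s)))) | j < m].
pose S := [set wf s | s in [set: m.-tuple 'I_k]].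
have wfI : injective wf.
  move=> s1 s2 H; apply: eq_from_tnth => j.
  have := congr1 (fun w => tnth w j) H; rewrite !tnth_mktuple.
  by case/letter_inj.
pose nu (t : 'I_k) := if t == i0 then 2 else 4.
have Hnu : \sum_t nu t = 4 * (k - 1) + 2.
  rewrite (bigD1 i0) //= /nu eqxx addnC.
  rewrite (eq_bigr (fun _ => 4)) => [|t /negbTE -> //].
  by rewrite sum_nat_const (@eq_card _ _ (predC1 i0)) // cardC1 card_ord mulnC subn1.
have Hmass : mass (mul i0) S = (4 * (k - 1) + 2) ^ m.
  rewrite /mass big_imset /=; last by move=> ? ? _ _; exact: wfI.
  rewrite -Hnu -sum_prod_tuple; apply: eq_big => [s|s _]; first by rewrite inE.
  rewrite big_map big_enum /= [in RHS]big_tuple; apply: eq_bigr => j _.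
  by rewrite /letter /nu /mul; case: eqP => // /eqP /negbTE ->.
have Hbig : Nb al 2 m D < mass (mul i0) S.
  apply: leq_ltn_trans (Nb_bound al1 (isT : 0 < 2) m D) _.
  apply: leq_trans Hm _; rewrite Hmass; apply: leq_expr.
  rewrite /al /alk gtn_max; apply/andP; split; lia.
have [pi /andP [Hsh Hcnt]] := big_sh (@pw_letters k i0) Hbig.
have [X HX] : exists X, d <= count (pred1 (Some X)) pi.
  move: Hcnt; rewrite count_isSome /D => H.
  case: (leqP d (count_mem (Some true) pi)) => H1; [by exists true | exists false].
  rewrite leqNgt; apply/negP => H2.
  have := leq_add H1 H2; rewrite addnn -mul2n => H3.
  by have := leq_trans H3 H; rewrite addSn addnS => /ltnW; rewrite ltnn.
pose P := [seq j <- enum 'I_m | tnth pi j == Some X].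
have HP : forall j, j \in P -> tnth pi j = Some X.
  by move=> j; rewrite mem_filter => /andP [/eqP].
exists (map gj P); split; last split.
- apply: List.NoDup_map_NoDup_ForallPairs.
    by move=> a b _ _; apply: gjI.
  by apply: uniq_NoDup; rewrite filter_uniq // enum_uniq.
- apply/leP; rewrite (_ : length _ = size P); last exact: size_map. rewrite size_filter.
  by rewrite -(map_tnth_enum pi) count_map in HX.
suff H : indep_set Z (updA A i0 (if X then B else C)) (map gj P).
  by destruct X; [left|right].
move=> I HI HIJ s_out.
pose p : m.-tuple (Lt k) :=
  [tuple (if tnth pi j is Some X' then letter (s_out (gj j)) X' else inl i0) | j < m].
have Hc : compat (Dlt i0) pi p.
  apply: (@compat_nth _ _ _ _ (inl i0 : Lt k)); first by rewrite !size_tuple.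
  move=> j Hj; rewrite size_tuple in Hj.
  have := tnth_mktuple (fun j => if tnth pi j is Some X' then letter (s_out (gj j)) X' else inl i0) (Ordinal Hj).
  rewrite !(tnth_nth None) !(tnth_nth (inl i0)) /= => ->.
  case: (nth None pi j) => // X'.
  rewrite /letter inE; case: eqP => [_|/eqP] //=.
have := (forallP Hsh) p; rewrite Hc /= => /existsP [w /andP [Hw2 Ha]].
case/imsetP: Hw2 => s _ Ew.
exists (zf s); split; first exact: zfZ.
move=> g /HIJ /List.in_map_iff [j [Egj /In_mem HjP]].
have Hpj := HP j HjP.
have Hag : tnth w j = tnth p j.
  rewrite !(tnth_nth (inl i0)).
  apply: (@agree_nth _ _ _ _ (inl i0 : Lt k) Ha) => //; rewrite ?size_tuple ?card_ord ?ltn_ord //.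
  by rewrite -(tnth_nth None pi j) Hpj.
move: Hag; rewrite Ew !tnth_mktuple Hpj Egj => /letter_inj [Es Eb].
rewrite /updA; case: eqP => [Hi|Hn].
  have Ei : tnth s j = i0 by rewrite Es.
  have Hb := Eb Ei.
  have HA0 := zfA s j; rewrite Ei Egj in HA0.
  destruct X.
    by apply/asbP.
  case: (HBC HA0) => // HB; exfalso; move: Hb; by rewrite (proj2 (asbP _) HB).
by rewrite -Es -Egj; exact: zfA.
Qed.

End U.

Lemma arb_mono (G : DGroup) (Sigma : finType) (Z : cfg G Sigma -> Prop) k
  (A A' : 'I_k -> cfg G Sigma -> Prop) :
  (forall i z, A i z -> A' i z) -> arb_large_indep Z A -> arb_large_indep Z A'.
Proof.
move=> H HA N; have [J [H1 [H2 HJ]]] := HA N; exists J; do 2 split => //.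
move=> I HI HIJ s; have [z [Hz Hz']] := HJ I HI HIJ s; exists z; split => // g Hg.
exact: H (Hz' g Hg).
Qed.

Lemma union2 (G : DGroup) (Sigma : finType) (Z : cfg G Sigma -> Prop) k
  (A : 'I_k -> cfg G Sigma -> Prop) i0 (B C : cfg G Sigma -> Prop) :
  (forall z, A i0 z -> B z \/ C z) -> arb_large_indep Z A ->
  arb_large_indep Z (updA A i0 B) \/ arb_large_indep Z (updA A i0 C).
Proof.
move=> HBC HA.
case: (classic (arb_large_indep Z (updA A i0 B))) => HB; [by left|right].
have [N1 HN1] := not_all_ex_not _ _ HB.
move=> N.
have [J [HJ1 [HJ2 [HJ3|HJ3]]]] := union_core HBC (maxn N N1) HA.
  exfalso; apply: HN1; exists J; split => //; split => //.
  apply/leP; apply: leq_trans (leq_maxr N N1) _; exact/leP.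
exists J; split => //; split => //.
apply/leP; apply: leq_trans (leq_maxl N N1) _; exact/leP.
Qed.

Lemma unionL (G : DGroup) (Sigma : finType) (Z : cfg G Sigma -> Prop) k (T : Type)
  (l : list T) (Bf : T -> cfg G Sigma -> Prop) (A : 'I_k -> cfg G Sigma -> Prop) i0 :
  (forall z, A i0 z -> exists s, List.In s l /\ Bf s z) -> arb_large_indep Z A ->
  exists s, List.In s l /\ arb_large_indep Z (updA A i0 (Bf s)).
Proof.
elim: l A => [|s l IH] A H HA.
  have [J [_ [HJ1 HJi]]] := HA 1.
  case: J HJ1 HJi => [|g J] HJ1 HJi; first by inversion HJ1.
  have HIJ : forall h, List.In h [:: g] -> List.In h (g :: J) by move=> h [<-|[]]; left.
  have [z [_ Hz]] := HJi [:: g] (fun E => ltac:(discriminate)) HIJ (fun _ => i0).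
  by have [s [[] _]] := H _ (Hz g (or_introl erefl)).
pose C := fun z => exists s', List.In s' l /\ Bf s' z.
have HBC : forall z, A i0 z -> Bf s z \/ C z.
  move=> z /H [s' [[<-|Hs'] Hz]]; [by left|right; by exists s'].
case: (union2 HBC HA) => HU; first by exists s; split => //; left.
have HC : forall z, updA A i0 C i0 z -> exists s', List.In s' l /\ Bf s' z.
  by move=> z; rewrite /updA eqxx.
have [s' [Hs' HA']] := IH (updA A i0 C) HC HU.
exists s'; split; first by right.
apply: arb_mono HA' => j z; rewrite /updA; by case: (j == i0).
Qed.

Lemma union_coords (G : DGroup) (Sigma : finType) (Z : cfg G Sigma -> Prop) n (S' : finType)
  (A : 'I_n -> cfg G Sigma -> Prop) (Bf : 'I_n -> S' -> cfg G Sigma -> Prop) (s0 : S') :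
  (forall i z, A i z -> exists s, Bf i s z) -> arb_large_indep Z A ->
  exists tau : 'I_n -> S', arb_large_indep Z (fun i => Bf i (tau i)).
Proof.
move=> H HA.
suff Ht : forall l : seq 'I_n, exists tau : 'I_n -> S',
    arb_large_indep Z (fun i => if i \in l then Bf i (tau i) else A i).
  have [tau Ht2] := Ht (enum 'I_n); exists tau.
  by apply: arb_mono Ht2 => i z; rewrite mem_enum.
elim => [|i l [tau IH]].
  by exists (fun _ => s0); apply: arb_mono HA => i z.
pose D := fun j => if j \in l then Bf j (tau j) else A j.
have HD : forall z, D i z -> exists s, List.In s (enum S') /\ Bf i s z.
  move=> z; rewrite /D; case: ifP => _ Hz.
    by exists (tau i); split => //; apply/In_mem; rewrite mem_enum.
  by have [s Hs] := H i z Hz; exists s; split => //; apply/In_mem; rewrite mem_enum.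
have [s [_ Hs]] := unionL HD IH.
exists (fun j => if j == i then s else tau j).
apply: arb_mono Hs => j z; rewrite /updA /D in_cons.
by case: eqP => [->|_] //=.
Qed.

Section Engine.
Variables (G : DGroup) (Sigma : finType) (I : Type) (f : G -> nat)
  (Good : nat -> (I -> cfg G Sigma) -> Prop).
Definition agr r (x x' : I -> cfg G Sigma) := forall i g, f g < r -> x i g = x' i g.
Hypothesis Ginv : forall r x x', Good r x -> agr r x x' -> Good r x'.
Hypothesis Gstep : forall r x, Good r x -> exists x', agr r x x' /\ Good r.+1 x'.
Variable x0 : I -> cfg G Sigma.
Hypothesis G0 : Good 0 x0.

Lemma engine : exists x, forall r, Good r x.
Proof.
pose next r x := match excluded_middle_informative (Good r x) with
  | left H => proj1_sig (constructive_indefinite_description _ (Gstep H)) | right _ => x end.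
pose xs := fix xs r := match r with 0 => x0 | r'.+1 => next r' (xs r') end.
have H1 : forall r, Good r (xs r) /\ agr r (xs r) (xs r.+1).
  suff HG : forall r, Good r (xs r).
    move=> r; split => //=; rewrite /next; case: excluded_middle_informative => [H|[]] //.
    exact: (proj1 (proj2_sig (constructive_indefinite_description _ (Gstep H)))).
  elim => [|r IH] //=; rewrite /next; case: excluded_middle_informative => [H|[]] //.
  exact: (proj2 (proj2_sig (constructive_indefinite_description _ (Gstep H)))).
have H2 : forall r d, agr r (xs r) (xs (r + d)).
  move=> r; elim => [|d IH]; first by rewrite addn0.
  move=> i g Hg; rewrite (IH i g Hg) addnS; apply: (proj2 (H1 (r + d))).
  exact: leq_trans Hg (leq_addr _ _).
exists (fun i g => xs (f g).+1 i g) => r.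
apply: Ginv (proj1 (H1 r)) _ => i g Hg .
have := H2 (f g).+1 (r - (f g).+1); rewrite subnKC // => H.
exact: (esym (H i g (ltnSn _))).
Qed.
End Engine.

Lemma ginv_mul (G : DGroup) (a b : G) : ginv (gmul a b) = gmul (ginv b) (ginv a).
Proof.
have E : gmul (gmul (ginv b) (ginv a)) (gmul a b) = gone G.
  by rewrite -gmulA (gmulA (ginv a)) gmulV gmul1 gmulV.
rewrite -[RHS]gmulg1 -(gmulgV (gmul a b)) gmulA E gmul1 //.
Qed.

Lemma shift_comp (G : DGroup) (Sigma : finType) (g h : G) (x : cfg G Sigma) :
  shift g (shift h x) = shift (gmul g h) x.
Proof. apply: functional_extensionality => u; by rewrite /shift ginv_mul gmulA. Qed.

Lemma list_bound (T : Type) (f : T -> nat) (F : list T) :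
  exists r, forall g, List.In g F -> f g < r.
Proof.
elim: F => [|a F [r IH]]; first by exists 0.
exists (maxn (f a).+1 r) => g /= [<-|/IH H]; first by rewrite leq_max leqnn.
by rewrite leq_max H orbT.
Qed.

Lemma inf_list (T : Type) : infinite_type T -> forall L : list T, exists h, ~ List.In h L.
Proof.
move=> HT L; apply: NNPP => H; apply: HT; exists L => a.
by apply: NNPP => Ha; apply: H; exists a.
Qed.

Lemma bounded_cover (T : Type) (P : T -> Prop) :
  (forall L, exists h, P h /\ ~ List.In h L) ->
  forall N, exists L, List.NoDup L /\ (N <= length L)%coq_nat /\ forall h, List.In h L -> P h.
Proof.
move=> H; elim => [|N [L [H1 [H2 H3]]]]; first by exists nil; split; [constructor|split; [lia|]].
have [h [Ph Hh]] := H L.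
exists (h :: L); split; first by constructor.
split; first by simpl; lia.
by move=> u /= [<-|/H3].
Qed.

Lemma recur (G : DGroup) (Sigma : finType) (X : cfg G Sigma -> Prop) (f : G -> nat) :
  (forall a b, f a = f b -> a = b) -> infinite_type G -> minimal_subshift X ->
  forall w, X w -> forall W, open_cfg W -> W w ->
  forall N, exists L, List.NoDup L /\ (N <= length L)%coq_nat /\
    forall h, List.In h L -> W (shift h w).
Proof.
move=> finj Hinf [[Hne [Hcl Hinv]] Hmin] w Xw W HW Ww.
apply: bounded_cover.
apply: NNPP => Hn.
have [LR HLR] : exists LR, forall h, W (shift h w) -> List.In h LR.
  have [L HL] := not_all_ex_not _ _ Hn.
  exists L => h Hh; apply: NNPP => Hh'; apply: HL; by exists h.
pose agrF r (c c' : cfg G Sigma) := forall g, f g < r -> c g = c' g.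
pose Good r (x : unit -> cfg G Sigma) :=
  forall L : list G, exists h, ~ List.In h L /\ agrF r (shift h w) (x tt).
have [xi Hxi] : exists xi : unit -> cfg G Sigma, forall r, Good r xi.
  apply: (@engine G Sigma unit f Good _ _ (fun _ => w)).
  - move=> r x x' Hx Hag L; have [h [Hh1 Hh2]] := Hx L; exists h; split => // g Hg.
    rewrite (Hh2 g Hg); exact: Hag.
  - move=> r x Hx.
    case: (classic (exists g, f g = r)) => [[gr Hgr]|Hno].
      pose xs (s : Sigma) : unit -> cfg G Sigma :=
        fun _ h => if excluded_middle_informative (h = gr) then s else x tt h.
      have Hag : forall s, agr f r x (xs s).
        move=> s [] g Hg; rewrite /xs; case: excluded_middle_informative => // E.
        by exfalso; move: Hg; rewrite E Hgr ltnn.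
      apply: NNPP => Hc.
      have Hns : forall s, ~ Good r.+1 (xs s).
        by move=> s Hs; apply: Hc; exists (xs s); split.
      have HL : forall s, exists L, forall h, ~ List.In h L -> ~ agrF r.+1 (shift h w) (xs s tt).
        move=> s; have [L HL] := not_all_ex_not _ _ (Hns s).
        exists L => h Hh Hag2; apply: HL; by exists h.
      pose Lf s := proj1_sig (constructive_indefinite_description _ (HL s)).
      have HLf : forall s h, ~ List.In h (Lf s) -> ~ agrF r.+1 (shift h w) (xs s tt).
        move=> s; exact: (proj2_sig (constructive_indefinite_description _ (HL s))).
      have [h [Hh1 Hh2]] := Hx (List.flat_map Lf (enum Sigma)).
      apply: (HLf (shift h w gr) h).
        move=> Hin; apply: Hh1; apply/List.in_flat_map; exists (shift h w gr); split => //.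
        by apply/In_mem; rewrite mem_enum.
      move=> g Hg; rewrite /xs; case: excluded_middle_informative => [E|Hng]; first by subst.
      apply: Hh2.
      have : f g <> r by move=> E; apply: Hng; apply: finj; rewrite E Hgr.
      lia.
    exists x; split; first by move=> ? ? ?.
    move=> L; have [h [Hh1 Hh2]] := Hx L; exists h; split => // g Hg; apply: Hh2.
    have : f g <> r by move=> E; apply: Hno; exists g.
    lia.
  - move=> L; have [h Hh] := inf_list Hinf L; exists h; split => // g; by [].
pose c := xi tt.
have Xc : X c.
  apply: NNPP => Hc.
  have [F HF] := Hcl c Hc.
  have [r Hr] := list_bound f F.
  have [h [_ Hh]] := Hxi r nil.
  apply: (HF (shift h w)); last exact: Hinv.
  move=> u Hu; exact: Hh u (Hr u Hu).
have [g0 Hg0] := Hmin c Xc W HW (ex_intro _ w (conj Xw Ww)).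
have [F HF] := HW _ Hg0.
have [r Hr] := list_bound f (List.map (gmul (ginv g0)) F).
have [h [Hh1 Hh2]] := Hxi r (List.map (gmul (ginv g0)) LR).
apply: Hh1.
have HW2 : W (shift g0 (shift h w)).
  apply: HF => u Hu.
  change (shift h w (gmul (ginv g0) u) = c (gmul (ginv g0) u)).
  apply: Hh2; apply: Hr; apply/List.in_map_iff; exists u; split => //.
rewrite shift_comp in HW2.
have Hin := HLR _ HW2.
apply/List.in_map_iff; exists (gmul g0 h); split => //.
by rewrite gmulA gmulV gmul1.
Qed.

Lemma fin_prefix (T : Type) (f : T -> nat) : (forall a b, f a = f b -> a = b) ->
  forall m, exists F, forall h, f h < m -> List.In h F.
Proof.
move=> finj; elim => [|m [F HF]]; first by exists nil.
case: (classic (exists h, f h = m)) => [[h0 Hh0]|Hno].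
  exists (h0 :: F) => h Hh; rewrite ltnS leq_eqVlt in Hh.
  case/orP: Hh => [/eqP E|/HF]; [left; apply: finj; by rewrite E Hh0|by right].
exists F => h Hh; rewrite ltnS leq_eqVlt in Hh.
case/orP: Hh => [/eqP E|/HF] //; exfalso; apply: Hno; by exists h.
Qed.

Lemma arb_point (G : DGroup) (Sigma : finType) (Z : cfg G Sigma -> Prop) k
  (A : 'I_k -> cfg G Sigma -> Prop) : arb_large_indep Z A -> forall i, exists c, A i c.
Proof.
move=> HA i; have [J [_ [HJ1 HJi]]] := HA 1.
case: J HJ1 HJi => [|g J] HJ1 HJi; first by inversion HJ1.
have HIJ : forall h, List.In h [:: g] -> List.In h (g :: J) by move=> h [<-|[]]; left.
have [z [_ Hz]] := HJi [:: g] (fun E => ltac:(discriminate)) HIJ (fun _ => i).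
by exists (shift g z); apply: Hz; left.
Qed.

Lemma In_map_inv (A B : Type) (f : A -> B) l y : List.In y (List.map f l) -> exists x, f x = y /\ List.In x l.
Proof. by move/List.in_map_iff. Qed.

Section Main.
Variables (G1 G2 : DGroup) (Sigma : finType) (phi : G1 -> G2)
  (X : cfg G2 Sigma -> Prop) (Y : cfg G1 Sigma -> Prop)
  (pi : cfg G2 Sigma -> cfg G1 Sigma).
Hypotheses (iG2 : infinite_type G2)
  (surj : forall b : G2, exists a : G1, phi a = b)
  (mX : minimal_subshift X)
  (piXY : forall x, X x -> Y (pi x))
  (piS : forall y, Y y -> exists x, X x /\ pi x = y)
  (cont : continuous_on X pi)
  (equiv : forall (g : G1) x, X x -> shift g (pi x) = pi (shift (phi g) x)).

Lemma dir_back n (x : 'I_n -> cfg G2 Sigma) : IN X x -> IN Y (fun i => pi (x i)).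
Proof.
move=> [HXx HINx]; split; first by move=> i; apply: piXY.
move=> U HU.
pose U' i := fun c => X c /\ U i (pi c).
have HU' : forall i, nbhd_in X (x i) (U' i).
  move=> i; split; first by move=> c [].
  have [_ [V [HV [Vy HVU]]]] := HU i.
  have [W [HW HWe]] := cont HV.
  exists W; split => //; split; first exact/(HWe _ (HXx i)).
  move=> c Xc Wc; split => //; apply: HVU; [exact: piXY | exact/(HWe _ Xc)].
have HA := HINx U' HU'.
pose cs b := proj1_sig (constructive_indefinite_description _ (surj b)).
have Hcs : forall b, phi (cs b) = b
  by move=> b; exact: (proj2_sig (constructive_indefinite_description _ (surj b))).
move=> N; have [J [HJ1 [HJ2 HJ3]]] := HA N.
exists (List.map cs J); split; last split.
- apply: List.NoDup_map_NoDup_ForallPairs => // a b _ _ E.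
  by rewrite -(Hcs a) E Hcs.
- rewrite (_ : length (map cs J) = length J); [exact: HJ2 | exact: size_map].
move=> I HI HIJ s.
pose I2 := List.map phi I.
have HI2 : I2 <> nil by rewrite /I2; case: (I) HI => // a l _ /=; discriminate.
have HI2J : forall h, List.In h I2 -> List.In h J.
  move=> h /List.in_map_iff [g [<- /HIJ /List.in_map_iff [h' [<- Hh']]]]; by rewrite Hcs.
have [w [Xw Hw]] := HJ3 I2 HI2 HI2J (fun h => s (cs h)).
exists (pi w); split; first exact: piXY.
move=> g Hg.
have [h' [Eg _]] := proj1 (List.in_map_iff _ _ _) (HIJ g Hg).
have [_ HU2] := Hw (phi g) (List.in_map _ _ _ Hg).
have Ecs : cs (phi g) = g by rewrite -Eg Hcs.
by rewrite Ecs -equiv // in HU2.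
Qed.

Lemma dir_fwd n (y : 'I_n -> cfg G1 Sigma) (f1 : G1 -> nat) (f2 : G2 -> nat) :
  (forall a b, f1 a = f1 b -> a = b) -> (forall a b, f2 a = f2 b -> a = b) ->
  IN Y y -> exists x, IN X x /\ forall i, y i = pi (x i).
Proof.
move=> f1inj f2inj [HYy HINy].
have [[[xx Xxx] [Hcl Hinv]] Hmin] := mX.
pose YC i m (c : cfg G1 Sigma) := forall h, f1 h < m -> c h = y i h.
have YCopen : forall i m, open_cfg (YC i m).
  move=> i m c Hc; have [F HF] := fin_prefix f1inj m; exists F => c' Hc' h Hh.
  rewrite (Hc' h (HF h Hh)); exact: Hc h Hh.
pose agrF r (c c' : cfg G2 Sigma) := forall g, f2 g < r -> c g = c' g.
pose Aset r m (x : 'I_n -> cfg G2 Sigma) i := fun z => X z /\ YC i m (pi z) /\ agrF r z (x i).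
pose Good r x := forall m, arb_large_indep X (Aset r m x).
have Amono : forall r r' m m' x i z, r <= r' -> m <= m' -> Aset r' m' x i z -> Aset r m x i z.
  move=> r r' m m' x i z Hr Hm [Xz [Yz Az]]; split => //; split.
    move=> h Hh; apply: Yz; exact: leq_trans Hh Hm.
  move=> g Hg; apply: Az; exact: leq_trans Hg Hr.
have Hroot : Good 0 (fun _ => xx).
  move=> m.
  case: (classic (exists a b, y a <> y b)) => [[a [b Hab]]|Hall].
    have [h0 Hh0] : exists h0, y a h0 <> y b h0.
      apply: NNPP => H; apply: Hab; apply: functional_extensionality => h.
      apply: NNPP => H'; apply: H; by exists h.
    pose m' := maxn m (f1 h0).+1.
    suff : arb_large_indep X (Aset 0 m' (fun _ => xx)).
      by apply: arb_mono => i z; apply: Amono; rewrite ?leq_maxl.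
    move=> N.
    pose U i := fun c => Y c /\ YC i m' c.
    have HU : forall i, nbhd_in Y (y i) (U i).
      move=> i; split; first by move=> c [].
      exists (YC i m'); split; first exact: YCopen.
      by split; [move=> h | move=> c Yc Hc; split].
    have [J [HJ1 [HJ2 HJ3]]] := HINy U HU N.
    have phiI : forall g1 g2, List.In g1 J -> List.In g2 J -> phi g1 = phi g2 -> g1 = g2.
      move=> g1 g2 H1 H2 E; apply: NNPP => Hne.
      pose s := fun g => if excluded_middle_informative (g = g1) then a else b.
      have HIJ : forall h, List.In h [:: g1; g2] -> List.In h J by move=> h /= [<-|[<-|[]]].
      have [z [Yz Hz]] := HJ3 [:: g1; g2] (fun E => ltac:(discriminate)) HIJ s.
      have [w [Xw Ew]] := piS Yz.
      have [_ Ha] := Hz g1 (or_introl erefl).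
      have [_ Hb] := Hz g2 (or_intror (or_introl erefl)).
      have Es1 : s g1 = a by rewrite /s; case: excluded_middle_informative.
      have Es2 : s g2 = b.
        rewrite /s; case: excluded_middle_informative => // E2; exfalso; exact: Hne (esym E2).
      rewrite Es1 in Ha; rewrite Es2 in Hb.
      have E3 : shift g1 z = shift g2 z by rewrite -Ew !equiv // E.
      have Hlt : f1 h0 < m' by rewrite leq_max ltnSn orbT.
      apply: Hh0; rewrite -(Ha h0 Hlt) -(Hb h0 Hlt) E3 //.
    exists (map phi J); split; last split.
    - apply: List.NoDup_map_NoDup_ForallPairs => // g1 g2 H1 H2; exact: phiI.
    - rewrite (_ : length (map phi J) = length J); [exact: HJ2 | exact: size_map].
    move=> I2 HI2 HI2J s2.
    pose pc h := match excluded_middle_informative (exists g, List.In g J /\ phi g = h) with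
      | left H => proj1_sig (constructive_indefinite_description _ H) | right _ => gone G1 end.
    have Hpc : forall h, List.In h (map phi J) -> List.In (pc h) J /\ phi (pc h) = h.
      move=> h /List.in_map_iff [g [E Hg]]; rewrite /pc.
      case: excluded_middle_informative => [H|[]]; last by exists g.
      exact: proj2_sig (constructive_indefinite_description _ H).
    pose I1 := map pc I2.
    have HI1 : I1 <> nil by rewrite /I1; case: (I2) HI2 => // a' l _ /=; discriminate.
    have HI1J : forall g, List.In g I1 -> List.In g J.
      move=> g /List.in_map_iff [h [<- Hh]]; exact: (proj1 (Hpc h (HI2J h Hh))).
    have [z [Yz Hz]] := HJ3 I1 HI1 HI1J (fun g => s2 (phi g)).
    have [w [Xw Ew]] := piS Yz.
    exists w; split => // h Hh.
    have [HpJ Hph] := Hpc h (HI2J h Hh).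
    have [_ HY] := Hz (pc h) (List.in_map _ _ _ Hh).
    rewrite Hph in HY.
    split; first exact: Hinv.
    split; last by move=> g.
    have := equiv (pc h) Xw; rewrite Hph Ew => E; rewrite -E; exact: HY.
  case: (classic (exists i : 'I_n, True)) => [[i0 _]|Hno]; last first.
    move=> N.
    have [L [HL1 [HL2 _]]] := @bounded_cover G2 (fun _ => True)
      (fun L => let: ex_intro h Hh := inf_list iG2 L in ex_intro _ h (conj I Hh)) N.
    exists L; split => //; split => // I HI _ s.
    case: I HI => [//|g I] _; exfalso; apply: Hno; by exists (s g).
  have Hall' : forall i, y i = y i0.
    move=> i; apply: NNPP => H; apply: Hall; by exists i, i0.
  have [w0 [Xw0 Ew0]] := piS (HYy i0).
  have [W [HW HWe]] := cont (YCopen i0 m).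
  have Ww0 : W w0 by apply/(HWe _ Xw0); rewrite Ew0 => h _.
  move=> N; have [L [HL1 [HL2 HL3]]] := recur f2inj iG2 mX Xw0 HW Ww0 N.
  exists L; split => //; split => // I HI HIL s; exists w0; split => // h Hh.
  have Xh := Hinv h w0 Xw0.
  split => //; split; last by move=> g.
  move=> h' Hh'; rewrite Hall'; apply: (proj2 (HWe _ Xh) (HL3 h (HIL h Hh))); exact: Hh'.
have Hinv' : forall r x x', Good r x -> agr f2 r x x' -> Good r x'.
  move=> r x x' Hx Hag m; apply: arb_mono (Hx m) => i z [Xz [Yz Az]].
  split => //; split => // g Hg; rewrite (Az g Hg); exact: Hag.
have Hstep : forall r x, Good r x -> exists x', agr f2 r x x' /\ Good r.+1 x'.
  move=> r x Hx.
  case: (classic (exists g, f2 g = r)) => [[gr Hgr]|Hno]; last first.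
    exists x; split; first by move=> ? ? ?.
    move=> m; apply: arb_mono (Hx m) => i z [Xz [Yz Az]]; split => //; split => // g Hg; apply: Az.
    have : f2 g <> r by move=> E; apply: Hno; exists g.
    lia.
  pose upd (c : cfg G2 Sigma) (s : Sigma) : cfg G2 Sigma :=
    fun h => if excluded_middle_informative (h = gr) then s else c h.
  pose xs (tau : {ffun 'I_n -> Sigma}) := fun i => upd (x i) (tau i).
  have Hm : forall m, exists tau : {ffun 'I_n -> Sigma}, arb_large_indep X (Aset r.+1 m (xs tau)).
    move=> m.
    have HAB : forall i z, Aset r m x i z ->
        exists s, (fun i s z => X z /\ YC i m (pi z) /\ agrF r.+1 z (upd (x i) s)) i s z.
      move=> i z [Xz [Yz Az]]; exists (z gr); split => //; split => // g Hg.
      rewrite /upd; case: excluded_middle_informative => [E|Hng]; first by subst.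
      apply: Az; have : f2 g <> r by move=> E; apply: Hng; apply: f2inj; rewrite E Hgr.
      lia.
    have [tau Htau] := union_coords (xx (gone G2)) HAB (Hx m).
    exists (finfun tau); apply: arb_mono Htau => i z; by rewrite /Aset /xs ffunE.
  have [tau Htau] : exists tau, forall m, arb_large_indep X (Aset r.+1 m (xs tau)).
    apply: NNPP => H.
    have H' : forall tau, exists m, ~ arb_large_indep X (Aset r.+1 m (xs tau)).
      move=> tau; apply: NNPP => H2; apply: H; exists tau => m; apply: NNPP => H3; apply: H2.
      by exists m.
    pose mf tau := proj1_sig (constructive_indefinite_description _ (H' tau)).
    have Hmf : forall tau, ~ arb_large_indep X (Aset r.+1 (mf tau) (xs tau)).
      move=> tau; exact: (proj2_sig (constructive_indefinite_description _ (H' tau))).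
    pose M := \max_(tau : {ffun 'I_n -> Sigma}) mf tau.
    have [tau Ht] := Hm M.
    apply: (Hmf tau); apply: arb_mono Ht => i z; apply: Amono => //; exact: leq_bigmax.
  exists (xs tau); split; last exact: Htau.
  move=> i g Hg; rewrite /xs /upd; case: excluded_middle_informative => // E.
  by exfalso; move: Hg; rewrite E Hgr ltnn.
have [xi Hxi] := @engine G2 Sigma 'I_n f2 Good Hinv' Hstep _ Hroot.
have Hpt : forall r m i, exists c, Aset r m xi i c.
  move=> r m i; exact: arb_point (Hxi r m) i.
have Xxi : forall i, X (xi i).
  move=> i; apply: NNPP => Hc; have [F HF] := Hcl _ Hc; have [r Hr] := list_bound f2 F.
  have [c [Xc [_ Ac]]] := Hpt r 0 i.
  apply: (HF c) => // h Hh; exact: Ac h (Hr h Hh).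
have Ey : forall i, y i = pi (xi i).
  move=> i; apply: functional_extensionality => h; apply: NNPP => Hne.
  pose V := fun c : cfg G1 Sigma => c h = pi (xi i) h.
  have HV : open_cfg V.
    move=> c Hc; exists [:: h] => c' Hc'; rewrite /V (Hc' h (or_introl erefl)); exact: Hc.
  have [W [HW HWe]] := cont HV.
  have Wxi : W (xi i) by apply/(HWe _ (Xxi i)).
  have [F HF] := HW _ Wxi.
  have [r Hr] := list_bound f2 F.
  have [c [Xc [Yc Ac]]] := Hpt r (f1 h).+1 i.
  have Wc : W c by apply: HF => u Hu; exact: Ac u (Hr u Hu).
  have Vc := proj2 (HWe _ Xc) Wc.
  apply: Hne; rewrite -(Yc h (ltnSn _)); exact: Vc.
exists xi; split; last exact: Ey.
split; first exact: Xxi.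
move=> U HU.
have HF : forall i, exists F, forall c, (forall h, List.In h F -> c h = xi i h) -> X c -> U i c.
  move=> i; have [HUX [V [HV [Vx HVU]]]] := HU i; have [F HF] := HV _ Vx.
  exists F => c Hc Xc; apply: HVU => //; exact: HF.
pose Ff i := proj1_sig (constructive_indefinite_description _ (HF i)).
have HFf : forall i c, (forall h, List.In h (Ff i) -> c h = xi i h) -> X c -> U i c.
  move=> i; exact: (proj2_sig (constructive_indefinite_description _ (HF i))).
have [r Hr] := list_bound f2 (List.flat_map Ff (enum 'I_n)).
apply: arb_mono (Hxi r 0) => i z [Xz [_ Az]]; apply: HFf => // h Hh; apply: Az; apply: Hr.
apply/List.in_flat_map; exists i; split => //; apply/In_mem; by rewrite mem_enum.
Qed.
End Main.


Unset Implicit Arguments.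

Theorem proposition3p3
  (G1 G2 : DGroup) (Sigma : finType) (phi : G1 -> G2)
  (X : cfg G2 Sigma -> Prop) (Y : cfg G1 Sigma -> Prop)
  (pi : cfg G2 Sigma -> cfg G1 Sigma) :
  countable_type G1 -> infinite_type G1 ->
  countable_type G2 -> infinite_type G2 ->
  group_hom phi -> (forall b : G2, exists a : G1, phi a = b) ->
  minimal_subshift X -> minimal_subshift Y ->
  (forall x, X x -> Y (pi x)) ->
  (forall y, Y y -> exists x, X x /\ pi x = y) ->
  continuous_on X pi ->
  (forall (g : G1) x, X x -> shift g (pi x) = pi (shift (phi g) x)) ->
  forall (n : nat) (y : 'I_n -> cfg G1 Sigma),
    IN Y y <-> exists x : 'I_n -> cfg G2 Sigma,
      IN X x /\ forall i, y i = pi (x i).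
Proof.
move=> [f1 Hf1] _ [f2 Hf2] iG2 hom surj mX mY piXY piS cont equiv n y; split.
  move=> HIN; exact: (dir_fwd iG2 mX piS cont equiv Hf1 Hf2 HIN).
move=> [x [Hx Ey]].
have -> : y = (fun i => pi (x i)) by apply: functional_extensionality.
exact: (dir_back surj piXY cont equiv Hx).
Qed.
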